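(* Let $a,q,t_1,\dots,t_m$ be complex numbers ($m\ge1$), let $F(z)=(1-az)\prod_{i=1}^{m}(1-t_iz)=\sum_{n\ge0}a_nz^n$, and for $k\ge0$ let $F_k(z)=\sum_{i=0}^ka_iz^i$ (so $F_k=F$ for $k\ge m+1$). Then $$\prod_{i=1}^{m}(1-t_iz)=\sum_{n=0}^\infty\frac{c_nz^{n}}{1-azq^n}$$ in $\mathbb{C}[[z]]$, where $c_0=1$ and for $n\ge1$, $$c_n=\sum_{k=0}^{\min\{m,n-1\}}g_{n-k}(q)\,q^{(n-k)k}\,[z^{n}]\Big\{\prod_{i=1}^{m}(1-t_iz)-\frac{F_k(z)}{1-az}\Big\},$$ with polynomials $g_n(q)$ ($n\ge1$) defined recursively by $g_n(q)=1-\sum_{i=1}^{n-1}g_{n-i}(q)\,q^{(n-i)i}$.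
   Context: $[z^m]\{f\}$ denotes the coefficient of $z^m$ in the formal power series $f$; $1/(1-az)$ and $1/(1-azq^n)$ are expanded as geometric series in $z$. Empty sums are $0$. *)

(* Defs.v *)
(* Complex numbers = R[i] (mathcomp-real-closed `complex`)
   over an arbitrary realType R (every realType is isomorphic to the reals). *)
From HB Require Import structures.
From mathcomp Require Import all_boot all_order all_algebra.
From mathcomp Require Import reals complex.
Set Implicit Arguments. Unset Strict Implicit. Unset Printing Implicit Defensive.
Import Order.TTheory GRing.Theory Num.Theory.
Local Open Scope ring_scope.

Section FPS.
Variable C : comRingType.

Definition fps := nat -> C.

Definition fps_of_poly (p : {poly C}) : fps := fun m => p`_m.

Definition fps_mul (f g : fps) : fps :=
  fun m => \sum_(i < m.+1) f i * g (m - i)%N.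

Definition fps_sub (f g : fps) : fps := fun m => f m - g m.

Definition fps_monom (c : C) (n : nat) : fps := fun m => if m == n then c else 0.

(* 1/(1 - b z) expanded as the geometric series sum_k b^k z^k. *)
Definition fps_geom (b : C) : fps := fun m => b ^+ m.

(* Sum of a family (u n)_{n>=0} of power series with u n = O(z^n)
   (z-adically summable): [z^m] of the sum is the finite sum over n <= m,
   since the terms with n > m contribute nothing to [z^m]. *)
Definition fps_sum_ord (u : nat -> fps) : fps :=
  fun m => \sum_(n < m.+1) u n m.

Definition poly_trunc (F : {poly C}) (k : nat) : {poly C} :=
  \sum_(i < k.+1) F`_i *: 'X^i.
End FPS.

Section Coeffs.
Variable C : comRingType.

(* gs q n = [:: g_1(q); ...; g_n(q)] with
   g_n(q) = 1 - sum_{i=1}^{n-1} g_{n-i}(q) q^{(n-i) i}. *)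
Fixpoint gs (q : C) (n : nat) : seq C :=
  match n with
  | 0 => [::]
  | n'.+1 =>
      let s := gs q n' in
      rcons s (1 - \sum_(1 <= i < n'.+1) nth 0 s (n'.+1 - i).-1 * q ^+ ((n'.+1 - i) * i))
  end.

Definition g (q : C) (n : nat) : C := nth 0 (gs q n) n.-1.

Definition Pt (m : nat) (t : 'I_m -> C) : {poly C} :=
  \prod_(i < m) (1 - t i *: 'X).

Definition Ft (m : nat) (a : C) (t : 'I_m -> C) : {poly C} :=
  (1 - a *: 'X) * Pt t.

Definition cn (m : nat) (a q : C) (t : 'I_m -> C) (n : nat) : C :=
  if n == 0%N then 1 else
  \sum_(k < (minn m n.-1).+1)
     g q (n - k) * q ^+ ((n - k) * k) *
     fps_sub (fps_of_poly (Pt t))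
             (fps_mul (fps_of_poly (poly_trunc (Ft a t) k)) (fps_geom a)) n.
End Coeffs.

(* Main.v *)
Require Import Defs.
From HB Require Import structures.
From mathcomp Require Import all_boot all_order all_algebra.
From mathcomp Require Import reals complex.
From mathcomp Require Import zify ring.
From Stdlib Require Import FunctionalExtensionality.
Import Order.TTheory GRing.Theory Num.Theory.
Local Open Scope ring_scope.

Section G.
Variable C : comRingType.
Variable q : C.

Lemma size_gs n : size (gs q n) = n.
Proof. by elim: n => //= n IH; rewrite size_rcons IH. Qed.

Lemma nth_gs n x : (0 < x <= n)%N -> nth 0 (gs q n) x.-1 = g q x.
Proof.
elim: n => [|n IH] /andP[x0 xn]; first by lia.
have [->|xne] := eqVneq x n.+1; first by [].
rewrite /= nth_rcons size_gs.
have -> : (x.-1 < n)%N by lia.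
apply: IH; lia.
Qed.

Lemma g_rec N : (0 < N)%N ->
  g q N = 1 - \sum_(1 <= i < N) g q (N - i) * q ^+ ((N - i) * i).
Proof.
case: N => // N _.
rewrite /g /= nth_rcons size_gs ltnn eqxx.
congr (_ - _); apply: eq_big_nat => i /andP[i1 iN].
by rewrite nth_gs //; lia.
Qed.

Lemma T_eq N : \sum_(0 <= k < N) g q (N - k) * q ^+ ((N - k) * k) = (N != 0%N)%:R.
Proof.
case: N => [|N]; first by rewrite big_geq.
rewrite big_ltn // subn0 muln0 expr0 mulr1 (@g_rec N.+1 (ltn0Sn N)) /=.
by rewrite subrK.
Qed.
End G.


Section SS.
Variable C : comRingType.
Variable q : C.
Definition XX M n k := g q (n - k) * q ^+ ((n - k) * k + n * (M - n)).
Definition SS M i := \sum_(i <= n < M.+1) \sum_(0 <= k < i) XX M n k.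

Lemma second M i : \sum_(0 <= k < i) XX M i k =
  q ^+ (i * (M - i)) * \sum_(0 <= k < i) g q (i - k) * q ^+ ((i - k) * k).
Proof.
rewrite big_distrr; apply: eq_big_nat => k _.
rewrite /XX exprD /=; ring.
Qed.

Lemma first M i : (i < M)%N -> \sum_(i.+1 <= n < M.+1) XX M n i =
  q ^+ (i * (M - i)) * \sum_(0 <= k < M - i) g q (M - i - k) * q ^+ ((M - i - k) * k).
Proof.
move=> iM.
rewrite big_distrr big_nat_rev /=.
rewrite -{1}(add0n i.+1) big_addn.
have -> : (M.+1 - i.+1 = M - i)%N by lia.
apply: eq_big_nat => k /andP[_ kM].
have -> : (i.+1 + M.+1 - (k + i.+1).+1 = M - k)%N by lia.
rewrite /XX mulrCA -exprD.
have -> : (M - k - i = M - i - k)%N by lia.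
congr (_ * q ^+ _).
have [r ->] : exists r, M = (i + k.+1 + r)%N by exists (M - (i + k.+1))%N; lia.
have -> : (i + k.+1 + r - k = i + r.+1)%N by lia.
have -> : (i + k.+1 + r - i - k = r.+1)%N by lia.
have -> : (i + k.+1 + r - i = k.+1 + r)%N by lia.
have -> : (i + k.+1 + r - (i + r.+1) = k)%N by lia.
ring.
Qed.

Lemma S_eq M i : (i <= M)%N -> SS M i = (i != 0%N)%:R.
Proof.
elim: i => [|i IH] iM.
  by rewrite /SS big1_seq // => n _; rewrite big_geq.
have {}IH := IH (ltnW iM).
move: IH; rewrite /SS.
rewrite [in X in X = _ -> _](@big_ltn _ _ _ i) ?ltnS ?(ltnW iM) //.
rewrite second T_eq => IH.
under eq_bigr => n _ do rewrite big_nat_recr //.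
rewrite big_split /= first // T_eq.
have -> : (M - i != 0)%N = true by lia.
move: IH; case: (i =P 0%N) => [->|_] /= IH.
  rewrite big1_seq ?add0r ?mul0n ?expr0 ?mulr1 // => n _; exact: big_geq.
by rewrite addrC.
Qed.
End SS.


Section Sums.
Variable C : comRingType.

Lemma to_full lo hi N (F : nat -> C) : (hi <= N)%N ->
  \sum_(lo <= i < hi) F i = \sum_(0 <= i < N) (if (lo <= i < hi)%N then F i else 0).
Proof.
move=> hN; rewrite -big_mkcond /=.
have [lh|hl] := ltnP lo hi; last first.
  by rewrite big_geq // big_nat_cond big1 // => i /and3P[_ a b]; exfalso; lia.
rewrite [RHS](big_cat_nat _ (n := lo)) //=; last by lia.
rewrite [X in _ = X + _]big_nat_cond [X in _ = X + _]big1 ?add0r; last first.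
  by move=> i /andP[/andP[_ a] /andP[b _]]; exfalso; lia.
rewrite (big_nat_widen lo hi N xpredT F hN) big_nat_cond [RHS]big_nat_cond.
by apply: eq_bigl => i; apply/idP/idP; lia.
Qed.

Lemma ifsum (c : bool) (r : seq nat) (G : nat -> C) :
  (if c then \sum_(i <- r) G i else 0) = \sum_(i <- r) (if c then G i else 0).
Proof. by case: c => //; rewrite big1. Qed.

Lemma ifif (b1 b2 : bool) (x : C) :
  (if b1 then (if b2 then x else 0) else 0) = if b1 && b2 then x else 0.
Proof. by case: b1. Qed.

Lemma swap3 M (Y : nat -> nat -> nat -> C) :
  \sum_(1 <= n < M.+1) \sum_(0 <= k < n) \sum_(0 <= j < n.+1) (if (k < j)%N then Y n k j else 0)
  = \sum_(1 <= j < M.+1) \sum_(j <= n < M.+1) \sum_(0 <= k < j) Y n k j.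
Proof.
rewrite (to_full _ _ _ _ (leqnn M.+1)).
rewrite [RHS](to_full _ _ _ _ (leqnn M.+1)).
transitivity (\sum_(0 <= n < M.+1) \sum_(0 <= k < M.+1) \sum_(0 <= j < M.+1)
   (if (k < j)%N && (j <= n)%N then Y n k j else 0)).
  apply: eq_big_nat => n /andP[_ nM].
  rewrite (to_full _ _ _ _ (ltnW nM)) ifsum; apply: eq_bigr => k _.
  rewrite (to_full _ _ _ _ nM) !ifsum; apply: eq_bigr => j _.
  rewrite !ifif; case: ifP => h1; case: ifP => h2 //; lia.
transitivity (\sum_(0 <= j < M.+1) \sum_(0 <= n < M.+1) \sum_(0 <= k < M.+1)
   (if (k < j)%N && (j <= n)%N then Y n k j else 0)); last first.
  symmetry; apply: eq_big_nat => j /andP[_ jM].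
  rewrite (to_full _ _ _ _ (leqnn M.+1)) ifsum; apply: eq_big_nat => n /andP[_ nM].
  rewrite (to_full _ _ _ _ (ltnW jM)) !ifsum; apply: eq_bigr => k _.
  rewrite !ifif; case: ifP => h1; case: ifP => h2 //; lia.
under eq_bigr => n _ do rewrite exchange_big.
exact: exchange_big.
Qed.
End Sums.


Section Poly.
Variable C : comRingType.

Lemma prod_coef_hi n (t : 'I_n -> C) j : (n < j)%N ->
  (\prod_(i < n) (1 - t i *: 'X))`_j = 0.
Proof.
elim: n t j => [|n IH] t j hj.
  by rewrite big_ord0 coef1; case: j hj.
rewrite big_ord_recr /= mulrBr mulr1 -scalerAr coefB coefZ coefMX.
rewrite IH; last lia.
case: j hj => // j hj /=; rewrite IH ?mulr0 ?subr0 //; lia.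
Qed.

Variables (m : nat) (a : C) (t : 'I_m -> C).
Local Notation p j := ((Pt t)`_j).
Local Notation f j := ((Ft a t)`_j).

Lemma p0 : p 0 = 1.
Proof.
rewrite -horner_coef0 /Pt horner_prod big1 // => i _.
by rewrite !hornerE subr0.
Qed.

Lemma p_hi j : (m < j)%N -> p j = 0.
Proof. exact: prod_coef_hi. Qed.

Lemma fE j : f j = p j - (if j == 0%N then 0 else a * p j.-1).
Proof.
rewrite /Ft mulrBl mul1r -scalerAl coefB coefZ coefXM.
by case: (j == 0%N); rewrite ?mulr0.
Qed.

Lemma f0 : f 0 = 1.
Proof. by rewrite fE p0 subr0. Qed.

Lemma f_hi j : (m.+1 < j)%N -> f j = 0.
Proof.
move=> h; rewrite fE p_hi; last lia.
case: j h => // j h /=; rewrite p_hi ?mulr0 ?subr0 //; lia.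
Qed.

Lemma sumA n : \sum_(j < n.+1) f j * a ^+ (n - j) = p n.
Proof.
elim: n => [|n IH]; first by rewrite big_ord1 subnn expr0 mulr1 f0 p0.
rewrite big_ord_recr /= subnn expr0 mulr1.
have -> : \sum_(i < n.+1) f (widen_ord (leqnSn n.+1) i) * a ^+ (n.+1 - widen_ord (leqnSn n.+1) i)
   = a * \sum_(j < n.+1) f j * a ^+ (n - j).
  rewrite big_distrr; apply: eq_bigr => i _ /=.
  have := ltn_ord i; rewrite ltnS => hi.
  by rewrite subSn // exprS; ring.
by rewrite IH fE /=; ring.
Qed.

Lemma trunc_coef k j : (poly_trunc (Ft a t) k)`_j = if (j < k.+1)%N then f j else 0.
Proof. by rewrite /poly_trunc -poly_def coef_poly. Qed.

Lemma dE k n :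
  fps_sub (fps_of_poly (Pt t)) (fps_mul (fps_of_poly (poly_trunc (Ft a t) k)) (fps_geom a)) n
  = \sum_(0 <= j < n.+1) (if (k < j)%N then f j * a ^+ (n - j) else 0).
Proof.
rewrite /fps_sub /fps_of_poly /fps_mul /fps_geom -(sumA n) -sumrB big_mkord.
apply: eq_bigr => j _; rewrite trunc_coef ltnS.
by case: leqP => _; rewrite ?subrr ?mul0r ?subr0.
Qed.

Lemma cnE q n : (0 < n)%N ->
  cn a q t n = \sum_(0 <= k < n) g q (n - k) * q ^+ ((n - k) * k) *
      \sum_(0 <= j < n.+1) (if (k < j)%N then f j * a ^+ (n - j) else 0).
Proof.
move=> n0; rewrite /cn; have -> : (n == 0%N) = false by lia.
have hw : ((minn m n.-1).+1 <= n)%N by lia.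
rewrite (big_ord_widen _ (fun k : nat => g q (n - k) * q ^+ ((n - k) * k) *
     fps_sub (fps_of_poly (Pt t))
             (fps_mul (fps_of_poly (poly_trunc (Ft a t) k)) (fps_geom a)) n) hw) big_mkcond big_mkord /=; apply: eq_bigr => k _.
rewrite dE; case: ifP => // hk.
rewrite big1 ?mulr0 // => j _.
case: ifP => // kj; move: (ltn_ord k) => kn; rewrite f_hi ?mul0r //; lia.
Qed.
End Poly.


Lemma mono (C : comRingType) (c b : C) n M : (n < M.+1)%N ->
  fps_mul (fps_monom c n) (fps_geom b) M = c * b ^+ (M - n).
Proof.
move=> nM; rewrite /fps_mul (bigD1 (Ordinal nM)) //= /fps_monom eqxx big1 ?addr0 //.
move=> i ne; rewrite ifF ?mul0r //; apply/negbTE; apply: contra ne => /eqP e.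
by apply/eqP/val_inj.
Qed.

Lemma main (C : comRingType) (m : nat) (a q : C) (t : 'I_m -> C) :
  fps_of_poly (Pt t) =
  fps_sum_ord (fun n => fps_mul (fps_monom (cn a q t n) n) (fps_geom (a * q ^+ n))).
Proof.
apply: functional_extensionality => M.
rewrite /fps_sum_ord /fps_of_poly.
rewrite (eq_bigr (fun n : 'I_M.+1 => cn a q t n * (a * q ^+ n) ^+ (M - n))); last first.
  by move=> n _; apply: mono.
rewrite -(big_mkord xpredT (fun n => cn a q t n * (a * q ^+ n) ^+ (M - n))).
rewrite -(@sumA _ _ a t M) -(big_mkord xpredT (fun j => (Ft a t)`_j * a ^+ (M - j))).
rewrite big_ltn // [RHS]big_ltn // f0 subn0.
have -> : cn a q t 0 = 1 by [].
rewrite expr0 mulr1 mul1r; congr (_ + _).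
transitivity (\sum_(1 <= j < M.+1) \sum_(j <= n < M.+1) \sum_(0 <= k < j)
   ((Ft a t)`_j * a ^+ (M - j) * XX _ q M n k)).
  apply: eq_big_nat => j /andP[j1 jM].
  have hS : SS _ q M j = 1.
    by rewrite S_eq; [rewrite (_ : (j != 0%N) = true) //; lia | lia].
  rewrite -[LHS]mulr1 -hS /SS mulr_sumr.
  by apply: eq_bigr => n _; rewrite mulr_sumr.
rewrite -swap3; apply: eq_big_nat => n /andP[n1 nM]; symmetry.
rewrite cnE // big_distrl /=; apply: eq_big_nat => k /andP[_ kn].
rewrite mulrAC big_distrr /=; apply: eq_big_nat => j /andP[_ jn].
case: ifP => kj; last by rewrite mulr0.
rewrite /XX exprMn -exprM exprD.
have e : (M - j = (n - j) + (M - n))%N by lia.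
rewrite e exprD; ring.
Qed.


Theorem corollary2p5 (R : realType) (m : nat) (hm : (1 <= m)%N)
  (a q : R[i]) (t : 'I_m -> R[i]) :
  fps_of_poly (Pt t) =
  fps_sum_ord (fun n => fps_mul (fps_monom (cn a q t n) n) (fps_geom (a * q ^+ n))).
Proof. exact: main. Qed.
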